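(* Consider the planner's problem \[ \min_{p,q,\omega\in\mathbb{R}^n,\ \theta\in\mathbb{R}^n}\ \sum_{j=1}^n J_j(p_j)+\tfrac12\omega^TD\omega \] subject to (with $\tilde\theta:=C^T\theta$) \[ q=p,\qquad \mathbf 1^T(q-d)=0,\qquad H^T(q-d)\le F,\qquad q-d-D\omega-CB\tilde\theta=0, \] and the problem \[ \text{(P2)}\quad \min_{q\in\mathbb{R}^{n}} \ \sum_{j=1}^{n} J_j(q_j) \quad\text{s.t.}\quad \mathbf 1^T(q-d)=0,\quad H^T(q-d)\le F . \] Then $(p^*,q^*,\omega^*,\tilde\theta^* )$ is an optimal solution to the planner's problem if and only if $p^*=q^*$, $\omega^*=0$, $\tilde\theta^*=C^TL^\dagger(q^*-d)$, and $q^*$ is an optimal solution to (P2).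
   Context: A power network is a connected directed graph $(\mathcal N,\mathcal E)$ with $\mathcal N=\{1,\dots,n\}$ (if $(j,k)\in\mathcal E$ then $(k,j)\notin\mathcal E$). $C\in\mathbb{R}^{n\times|\mathcal E|}$ is the incidence matrix: $C_{j,e}=1$ if $e=(j,k)\in\mathcal E$, $C_{j,e}=-1$ if $e=(k,j)\in\mathcal E$, $0$ otherwise. $B$ is an $|\mathcal E|\times|\mathcal E|$ diagonal matrix with positive diagonal entries; $D$ is an $n\times n$ diagonal matrix with positive diagonal entries. $L:=CBC^T$, $L^\dagger$ its Moore–Penrose inverse, and $H\in\mathbb{R}^{n\times2|\mathcal E|}$ is defined by $H^T=\begin{bmatrix} BC^TL^\dagger\\ -BC^TL^\dagger\end{bmatrix}$. $F:=\begin{bmatrix}\overline F\\ -\underline F\end{bmatrix}$ for given line limits $\underline F,\overline F\in\mathbb{R}^{|\mathcal E|}$. $d\in\mathbb{R}^n$ is given; each $J_j:\mathbb{R}\to\mathbb{R}$ is strictly convex and twice differentiable. *)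

(* Defs.v *)
From HB Require Import structures.
From mathcomp Require Import all_boot all_order all_algebra.
From mathcomp Require Import all_classical all_reals.
From mathcomp Require Import topology normedtype derive.
Set Implicit Arguments. Unset Strict Implicit. Unset Printing Implicit Defensive.
Import Order.TTheory GRing.Theory Num.Theory.
Import numFieldNormedType.Exports.
Local Open Scope ring_scope.

Definition simple_digraph (n m : nat) (src tgt : 'I_m -> 'I_n) : Prop :=
  injective (fun e => (src e, tgt e)) /\
  (forall e e' : 'I_m, ~ (src e = tgt e' /\ tgt e = src e')).

Definition adj (n m : nat) (src tgt : 'I_m -> 'I_n) : rel 'I_n :=
  fun a b => [exists e, ((src e == a) && (tgt e == b)) || ((src e == b) && (tgt e == a))].

Definition graph_connected (n m : nat) (src tgt : 'I_m -> 'I_n) : Prop :=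
  forall a b : 'I_n, connect (adj src tgt) a b.

Definition incidence (R : pzRingType) (n m : nat) (src tgt : 'I_m -> 'I_n) : 'M[R]_(n, m) :=
  \matrix_(j, e) (if src e == j then 1 else if tgt e == j then -1 else 0).

(* Moore–Penrose inverse (real matrices: adjoint = transpose). *)
Definition is_MP_inverse (R : pzRingType) (k : nat) (A X : 'M[R]_k) : Prop :=
  [/\ A *m X *m A = A, X *m A *m X = X,
      (A *m X)^T = A *m X & (X *m A)^T = X *m A].

Definition strictly_convex (R : realType) (f : R -> R) : Prop :=
  forall x y t : R, x != y -> 0 < t -> t < 1 ->
    f (t * x + (1 - t) * y) < t * f x + (1 - t) * f y.

Definition twice_differentiable (R : realType) (f : R -> R) : Prop :=
  forall x : R, derivable f x 1 /\ derivable (derive1 f) x 1.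

Definition vle (R : numDomainType) (k : nat) (u v : 'cV[R]_k) : Prop :=
  forall i, u i 0 <= v i 0.

Definition planner_feasible (R : realType) (n m : nat) (C : 'M[R]_(n, m))
  (B : 'M[R]_m) (D : 'M[R]_n) (HT : 'M[R]_(m + m, n)) (F : 'cV[R]_(m + m))
  (d p q w : 'cV[R]_n) (tht : 'cV[R]_m) : Prop :=
  [/\ exists th : 'cV[R]_n, tht = C^T *m th,
      q = p,
      (const_mx 1 : 'rV[R]_n) *m (q - d) = 0,
      vle (HT *m (q - d)) F
    & q - d - D *m w - C *m B *m tht = 0].

Definition planner_obj (R : realType) (n : nat) (J : 'I_n -> R -> R)
  (D : 'M[R]_n) (p w : 'cV[R]_n) : R :=
  \sum_(j < n) J j (p j 0) + 2^-1 * (w^T *m D *m w) 0 0.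

Definition planner_optimal (R : realType) (n m : nat) (J : 'I_n -> R -> R)
  (C : 'M[R]_(n, m)) (B : 'M[R]_m) (D : 'M[R]_n) (HT : 'M[R]_(m + m, n))
  (F : 'cV[R]_(m + m)) (d p q w : 'cV[R]_n) (tht : 'cV[R]_m) : Prop :=
  planner_feasible C B D HT F d p q w tht /\
  forall p' q' w' (tht' : 'cV[R]_m),
    planner_feasible C B D HT F d p' q' w' tht' ->
    planner_obj J D p w <= planner_obj J D p' w'.

Definition P2_feasible (R : realType) (n m : nat) (HT : 'M[R]_(m + m, n))
  (F : 'cV[R]_(m + m)) (d q : 'cV[R]_n) : Prop :=
  (const_mx 1 : 'rV[R]_n) *m (q - d) = 0 /\ vle (HT *m (q - d)) F.

Definition P2_optimal (R : realType) (n m : nat) (J : 'I_n -> R -> R)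
  (HT : 'M[R]_(m + m, n)) (F : 'cV[R]_(m + m)) (d q : 'cV[R]_n) : Prop :=
  P2_feasible HT F d q /\
  forall q', P2_feasible HT F d q' ->
    \sum_(j < n) J j (q j 0) <= \sum_(j < n) J j (q' j 0).

(* Main.v *)
Require Import Defs.
From HB Require Import structures.
From mathcomp Require Import all_boot all_order all_algebra.
From mathcomp Require Import all_classical all_reals.
From mathcomp Require Import topology normedtype derive.
From mathcomp Require Import ring lra.
Import Order.TTheory GRing.Theory Num.Theory.
Import numFieldNormedType.Exports.
Local Open Scope ring_scope.

Lemma quad_diag (R : realType) k (c : 'I_k -> R) (u : 'cV[R]_k) :
  (u^T *m diag_mx (\row_i c i) *m u) 0 0 = \sum_i c i * u i 0 ^+ 2.
Proof.
rewrite mul_mx_diag !mxE; apply: eq_bigr => i _; rewrite !mxE; ring.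
Qed.

Lemma quad_diag_ge0 (R : realType) k (c : 'I_k -> R) (u : 'cV[R]_k) :
  (forall i, 0 < c i) -> 0 <= (u^T *m diag_mx (\row_i c i) *m u) 0 0.
Proof.
move=> Hc; rewrite quad_diag; apply: sumr_ge0 => i _.
by apply: mulr_ge0; [exact: ltW | exact: sqr_ge0].
Qed.

Lemma quad_diag_eq0 (R : realType) k (c : 'I_k -> R) (u : 'cV[R]_k) :
  (forall i, 0 < c i) -> (u^T *m diag_mx (\row_i c i) *m u) 0 0 = 0 -> u = 0.
Proof.
move=> Hc; rewrite quad_diag => H.
have H0 := psumr_eq0P _ H.
apply/matrixP => i j; rewrite (ord1 j) mxE.
have /H0 : true by [].
have : 0 <= c i * u i 0 ^+ 2 by apply: mulr_ge0; [exact: ltW | exact: sqr_ge0].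
move=> _ H1.
have H2 : c i * u i 0 ^+ 2 = 0.
  apply: H0 => // l _; apply: mulr_ge0; [exact: ltW | exact: sqr_ge0].
move/eqP: H2; rewrite mulf_eq0 (gt_eqF (Hc i)) /= sqrf_eq0 => /eqP //.
Qed.

Lemma incT_entry (R : realType) n m (src tgt : 'I_m -> 'I_n) (y : 'cV[R]_n) e :
  src e != tgt e ->
  ((incidence R src tgt)^T *m y) e 0 = y (src e) 0 - y (tgt e) 0.
Proof.
move=> Hne; rewrite mxE (bigD1 (src e)) //= (bigD1 (tgt e)) /=; last by rewrite eq_sym.
rewrite big1 ?addr0; last first.
  move=> j /andP[H1 H2]; rewrite !mxE eq_sym (negbTE H1) eq_sym (negbTE H2); ring.
rewrite !mxE !eqxx (negbTE Hne); ring.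
Qed.
Theorem theorem1 (R : realType) (n m : nat) (src tgt : 'I_m -> 'I_n)
  (b : 'I_m -> R) (dD : 'I_n -> R) (Ldag : 'M[R]_n)
  (Fup Flow : 'cV[R]_m) (d : 'cV[R]_n) (J : 'I_n -> R -> R)
  (p q w : 'cV[R]_n) (tht : 'cV[R]_m) :
  simple_digraph src tgt ->
  graph_connected src tgt ->
  (forall e, 0 < b e) ->
  (forall j, 0 < dD j) ->
  let C : 'M[R]_(n, m) := incidence R src tgt in
  let B : 'M[R]_m := diag_mx (\row_e b e) in
  let D : 'M[R]_n := diag_mx (\row_j dD j) in
  let L : 'M[R]_n := C *m B *m C^T in
  is_MP_inverse L Ldag ->
  let HT : 'M[R]_(m + m, n) := col_mx (B *m C^T *m Ldag) (- (B *m C^T *m Ldag)) in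
  let F : 'cV[R]_(m + m) := col_mx Fup (- Flow) in
  (forall j, strictly_convex (J j)) ->
  (forall j, twice_differentiable (J j)) ->
  planner_optimal J C B D HT F d p q w tht <->
  [/\ p = q, w = 0, tht = C^T *m Ldag *m (q - d) & P2_optimal J HT F d q].
Proof.
move=> [_ Hsimp] Hconn Hb HdD C B D L [MP1 MP2 MP3 MP4] HT F _ _.
have Hne : forall e, src e != tgt e.
  by move=> e; apply/eqP => Heq; apply: (Hsimp e e); split.
have Lsym : L^T = L.
  by rewrite /L !trmx_mul trmxK tr_diag_mx !mulmxA.
have Hker : forall y : 'cV[R]_n, L *m y = 0 -> C^T *m y = 0.
  move=> y Hy; apply: (@quad_diag_eq0 R m b (C^T *m y) Hb).
  have -> : (C^T *m y)^T *m diag_mx (\row_i b i) *m (C^T *m y) = y^T *m (L *m y).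
    by rewrite /L trmx_mul trmxK !mulmxA.
  by rewrite Hy mulmx0 mxE.
have Hconst : forall y : 'cV[R]_n, C^T *m y = 0 -> forall a c, y a 0 = y c 0.
  move=> y Hy.
  have He : forall e, y (src e) 0 = y (tgt e) 0.
    move=> e; apply/eqP; rewrite -subr_eq0 -(incT_entry _ _ _ _ _ y _ (Hne e)).
    by rewrite /C in Hy; rewrite Hy mxE.
  move=> a c; have /connectP [s Hs ->] := Hconn a c.
  elim: s a Hs => [|c' s IH] a //= /andP [Hac Hs].
  rewrite -(IH c' Hs); case/existsP: Hac => e /orP [] /andP [/eqP <- /eqP <-]; first by rewrite He.
  by rewrite He.
have Hrange : forall x : 'cV[R]_n, (const_mx 1 : 'rV[R]_n) *m x = 0 -> L *m Ldag *m x = x.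
  move=> x Hx.
  pose P := L *m Ldag.
  have PP : P *m P = P by rewrite /P mulmxA MP1.
  pose y := x - P *m x.
  have Ly : L *m y = 0.
    rewrite -Lsym /y mulmxBr mulmxA.
    have -> : L^T *m P = L^T by rewrite /P -MP3 -trmx_mul MP1.
    by rewrite subrr.
  have Py : P *m y = 0 by rewrite /y mulmxBr mulmxA PP subrr.
  have Hyc := Hconst y (Hker y Ly).
  have yx : (y^T *m x) 0 0 = 0.
    rewrite mxE; have [j0 _|none] := pickP (@predT 'I_n).
      transitivity (y j0 0 * ((const_mx 1 : 'rV[R]_n) *m x) 0 0); last by rewrite Hx !mxE mulr0.
      have -> : ((const_mx 1 : 'rV[R]_n) *m x) 0 0 = \sum_j x j 0 by rewrite mxE; apply: eq_bigr => j _; rewrite mxE mul1r.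
      rewrite mulr_sumr; apply: eq_bigr => j _; rewrite [y^T 0 j]mxE (Hyc j j0); ring.
    by rewrite big1 // => j; have := none j.
  have yy : (y^T *m y) 0 0 = 0.
    have -> : y^T *m y = y^T *m x - y^T *m P *m x.
      by rewrite {2}/y mulmxBr mulmxA.
    have -> : y^T *m P = 0.
      by rewrite /P -MP3 -trmx_mul -/P Py trmx0.
    by rewrite mul0mx subr0.
  have y0 : y = 0.
    apply: (@quad_diag_eq0 R n (fun _ => 1)) => //.
    rewrite -[RHS]yy quad_diag [(y^T *m y) 0 0]mxE; apply: eq_bigr => j _; rewrite [y^T 0 j]mxE; ring.
  by apply/eqP; rewrite eq_sym -subr_eq0 -/y y0.
have Hproj : forall th : 'cV[R]_n, C^T *m Ldag *m (L *m th) = C^T *m th.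
  move=> th.
  have H0 : L *m (th - Ldag *m (L *m th)) = 0 by rewrite mulmxBr (mulmxA L Ldag) (mulmxA (L *m Ldag) L) MP1 subrr.
  have := Hker _ H0; rewrite mulmxBr => /eqP; rewrite subr_eq0 => /eqP ->.
  by rewrite !mulmxA.
have alt_feas : forall q', P2_feasible HT F d q' ->
    planner_feasible C B D HT F d q' q' 0 (C^T *m Ldag *m (q' - d)).
  move=> q' [H1 Hv]; split => //.
    by exists (Ldag *m (q' - d)); rewrite mulmxA.
  by rewrite mulmx0 subr0 !mulmxA (Hrange _ H1) subrr.
have obj0 : forall q', planner_obj J D q' 0 = \sum_j J j (q' j 0).
  by move=> q'; rewrite /planner_obj trmx0 !mul0mx mxE mulr0 addr0.
split.
- move=> [[[th Hth] Hqp H1 Hv Heq] Hopt].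
  have Hw : w = 0.
    have := Hopt _ _ _ _ (alt_feas q (conj H1 Hv)).
    rewrite obj0 /planner_obj -Hqp => Hle.
    apply: (@quad_diag_eq0 R n dD w HdD); apply/eqP; rewrite eq_le quad_diag_ge0 // andbT.
    move: Hle; rewrite /D; set Q := (_ 0 0); set S := (\sum_j _); lra.
  have Hqd : q - d = L *m th.
    by move: Heq; rewrite Hw mulmx0 subr0 Hth !mulmxA => /eqP; rewrite subr_eq0 => /eqP.
  split => //.
  + by rewrite Hqd Hproj Hth.
  + split; first by [].
    move=> q' Hq'; have := Hopt _ _ _ _ (alt_feas q' Hq').
    by rewrite obj0 /planner_obj Hw -Hqp trmx0 !mul0mx mxE mulr0 addr0.
- case=> -> -> -> [[H1 Hv] Hopt]; split; first exact: alt_feas.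
  move=> p' q' w' tht' [_ Hqp' H1' Hv' _].
  rewrite obj0 /planner_obj -Hqp' /D.
  have := Hopt q' (conj H1' Hv'); have := quad_diag_ge0 _ _ _ w' HdD; lra.
Qed.
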